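(* Let $\Omega\subset\mathbb{R}^2$ be a compact convex set with nonempty interior $\Omega^\circ$, let $P\subset\Omega^\circ$ be a finite set, and let $f=G_P\mathbf{0}_\Omega$. Then every connected component of $\Omega^\circ\setminus C(f)$ whose closure does not intersect $\partial\Omega$ contains a point of $P$ in its closure.
   Context: An $\Omega$-tropical series is a function $f:\Omega\to\mathbb{R}$ such that $f\ge 0$ on $\Omega$, $f=0$ on $\partial\Omega$, and there exist coefficients $c_{ij}\in\mathbb{R}\cup\{+\infty\}$, $(i,j)\in\mathbb{Z}^2$, such that for all $(x,y)\in\Omega^\circ$, $f(x,y)=\min\{c_{ij}+ix+jy : (i,j)\in\mathbb{Z}^2\}$. Let $V(\Omega)$ denote the set of all $\Omega$-tropical series. For $f\in V(\Omega)$, the $\Omega$-tropical curve $C(f)$ is the set of points of $\Omega^\circ$ at which $f$ is not smooth (the corner locus). For a finite set $P\subset\Omega^\circ$ and $f\in V(\Omega)$, define $G_Pf(x,y)=\min\{g(x,y) : g\in V(\Omega),\ g\ge f,\ P\subset C(g)\}$ (pointwise). $\mathbf{0}_\Omega$ denotes the identically zero function on $\Omega$ (an $\Omega$-tropical series). *)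

(* Defs.v *)
From Stdlib Require Import Reals ZArith List.
Open Scope R_scope.

Definition pt := (R * R)%type.
Definition pset := pt -> Prop.

Definition pl_ball (p : pt) (r : R) : pset :=
  fun q => (fst q - fst p)^2 + (snd q - snd p)^2 < r^2.

Definition pl_is_open (U : pset) : Prop :=
  forall p, U p -> exists r, 0 < r /\ forall q, pl_ball p r q -> U q.

Definition pl_interior (S : pset) : pset :=
  fun p => exists r, 0 < r /\ forall q, pl_ball p r q -> S q.

Definition pl_closure (S : pset) : pset :=
  fun p => forall r, 0 < r -> exists q, pl_ball p r q /\ S q.

Definition pl_boundary (S : pset) : pset :=
  fun p => pl_closure S p /\ ~ pl_interior S p.

Definition pl_compact (S : pset) : Prop :=
  forall (I : Type) (U : I -> pset),
    (forall i, pl_is_open (U i)) ->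
    (forall p, S p -> exists i, U i p) ->
    exists l : list I, forall p, S p -> exists i, In i l /\ U i p.

Definition convex (S : pset) : Prop :=
  forall p q t, S p -> S q -> 0 <= t <= 1 ->
    S (t * fst p + (1 - t) * fst q, t * snd p + (1 - t) * snd q).

Definition pl_connected (S : pset) : Prop :=
  ~ exists U V : pset, pl_is_open U /\ pl_is_open V /\
      (forall p, S p -> U p \/ V p) /\
      (exists p, S p /\ U p) /\ (exists p, S p /\ V p) /\
      (forall p, S p -> U p -> V p -> False).

Definition pl_component (A : pset) (x : pt) : pset :=
  fun y => exists S : pset, pl_connected S /\ (forall z, S z -> A z) /\ S x /\ S y.

Definition is_component (A : pset) (K : pset) : Prop :=
  exists x, A x /\ forall y, K y <-> pl_component A x y.

Definition smooth_at (Omega : pset) (f : pt -> R) (p : pt) : Prop :=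
  exists r a b c, 0 < r /\
    forall q, pl_ball p r q -> Omega q -> f q = a + b * fst q + c * snd q.

(* Coefficients: None stands for +infinity *)
Definition is_tropical_series (Omega : pset) (f : pt -> R) : Prop :=
  (forall p, Omega p -> 0 <= f p) /\
  (forall p, pl_boundary Omega p -> f p = 0) /\
  exists c : Z -> Z -> option R,
    forall p, pl_interior Omega p ->
      (exists i j v, c i j = Some v /\
          f p = v + IZR i * fst p + IZR j * snd p) /\
      (forall i j v, c i j = Some v ->
          f p <= v + IZR i * fst p + IZR j * snd p).

Definition trop_curve (Omega : pset) (f : pt -> R) : pset :=
  fun p => pl_interior Omega p /\ ~ smooth_at Omega f p.

Definition is_GP (Omega : pset) (P : list pt) (f h : pt -> R) : Prop :=
  forall p, Omega p ->
    (exists g, is_tropical_series Omega g /\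
       (forall q, Omega q -> f q <= g q) /\
       (forall q, In q P -> trop_curve Omega g q) /\ g p = h p) /\
    (forall g, is_tropical_series Omega g ->
       (forall q, Omega q -> f q <= g q) ->
       (forall q, In q P -> trop_curve Omega g q) -> h p <= g p).

Definition zero_fun : pt -> R := fun _ => 0.

(* Main.v *)
Require Import Defs.
From Stdlib Require Import Reals ZArith List Lia Psatz Classical ClassicalEpsilon Lra.
Open Scope R_scope.

Definition comb (a b : pt) (t : R) : pt :=
  ((1 - t) * fst a + t * fst b, (1 - t) * snd a + t * snd b).

Lemma ball_coord p r q : pl_ball p r q -> 0 < r ->
  Rabs (fst q - fst p) < r /\ Rabs (snd q - snd p) < r.
Proof.
  unfold pl_ball; intros H Hr.
  pose proof (pow2_ge_0 (fst q - fst p)). pose proof (pow2_ge_0 (snd q - snd p)).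
  split; apply Rabs_def1.
  - destruct (Rlt_or_le (fst q - fst p) r); auto. nra.
  - destruct (Rlt_or_le (- r) (fst q - fst p)); auto. nra.
  - destruct (Rlt_or_le (snd q - snd p) r); auto. nra.
  - destruct (Rlt_or_le (- r) (snd q - snd p)); auto. nra.
Qed.

Lemma ball_center p r : 0 < r -> pl_ball p r p.
Proof. unfold pl_ball; intros; nra. Qed.

Lemma ball_mono x r r' w : pl_ball x r w -> 0 < r -> r <= r' -> pl_ball x r' w.
Proof. unfold pl_ball; intros; nra. Qed.

Lemma ball_tri x z w s t : pl_ball z s w -> pl_ball x t z -> 0 < s -> 0 < t ->
  pl_ball x (s + t) w.
Proof.
  unfold pl_ball; intros H1 H2 Hs Ht.
  set (u1 := fst w - fst z) in *. set (u2 := snd w - snd z) in *.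
  set (v1 := fst z - fst x) in *. set (v2 := snd z - snd x) in *.
  replace (fst w - fst x) with (u1 + v1) by (unfold u1, v1; ring).
  replace (snd w - snd x) with (u2 + v2) by (unfold u2, v2; ring).
  assert (CS : (u1*v1 + u2*v2)^2 <= (u1^2+u2^2)*(v1^2+v2^2)).
  { pose proof (pow2_ge_0 (u1*v2 - u2*v1)). nra. }
  assert (HP : (u1^2+u2^2)*(v1^2+v2^2) < (s*t)^2).
  { pose proof (pow2_ge_0 u1). pose proof (pow2_ge_0 u2). pose proof (pow2_ge_0 v1). pose proof (pow2_ge_0 v2). nra. }
  assert (u1*v1 + u2*v2 < s*t).
  { destruct (Rlt_or_le (u1*v1 + u2*v2) (s*t)) as [h|h]; auto.
    assert (0 < s*t) by nra. nra. }
  lra.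
Qed.

Lemma ball_open x r k : 0 < r -> pl_ball x r k ->
  exists rho, 0 < rho /\ forall w, pl_ball k rho w -> pl_ball x r w.
Proof.
  intros Hr Hk. unfold pl_ball in Hk.
  set (d2 := (fst k - fst x)^2 + (snd k - snd x)^2) in *.
  assert (Hd2 : 0 <= d2) by (unfold d2; pose proof (pow2_ge_0 (fst k - fst x)); pose proof (pow2_ge_0 (snd k - snd x)); lra).
  set (d := sqrt d2).
  assert (Hdd : d * d = d2) by (apply sqrt_sqrt; auto).
  assert (Hd0 : 0 <= d) by apply sqrt_pos.
  assert (Hdr : d < r) by nra.
  exists ((r - d)/2); split; [lra|].
  intros w Hw.
  replace r with ((r - d)/2 + (r + d)/2) by field.
  apply ball_tri with k; auto; try lra.
  unfold pl_ball; fold d2; nra.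
Qed.

Lemma interior_in (Om : pset) z : pl_interior Om z -> Om z.
Proof. intros [r [Hr H]]. apply H, ball_center; auto. Qed.

Lemma interior_open (Om : pset) z : pl_interior Om z ->
  exists r, 0 < r /\ forall w, pl_ball z r w -> pl_interior Om w.
Proof.
  intros [r [Hr H]]. exists r; split; auto. intros w Hw.
  destruct (ball_open z r w Hr Hw) as [rho [Hrho H2]].
  exists rho; split; auto.
Qed.

Lemma convex_comb (Om : pset) a b t : convex Om -> Om a -> Om b -> 0 <= t <= 1 ->
  Om (comb a b t).
Proof.
  intros Hc Ha Hb Ht.
  replace (comb a b t) with (t * fst b + (1 - t) * fst a, t * snd b + (1 - t) * snd a)
    by (unfold comb; f_equal; ring).
  apply Hc; auto.
Qed.

Lemma comb_ball_pre a b t R w : 0 <= t < 1 -> 0 < R ->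
  pl_ball (comb a b t) ((1 - t) * R) w ->
  exists a', pl_ball a R a' /\ w = comb a' b t.
Proof.
  intros Ht HR Hw.
  set (u := 1 - t). assert (Hu : 0 < u) by (unfold u; lra).
  set (z := comb a b t) in *.
  exists (fst a + (fst w - fst z)/u, snd a + (snd w - snd z)/u).
  split.
  - unfold pl_ball in *; cbn [fst snd]. fold u in Hw.
    replace ((fst a + (fst w - fst z) / u - fst a) ^ 2 + (snd a + (snd w - snd z) / u - snd a) ^ 2)
      with (((fst w - fst z) ^ 2 + (snd w - snd z) ^ 2) / u^2) by (field; lra).
    apply Rmult_lt_reg_r with (u^2). nra.
    replace (((fst w - fst z) ^ 2 + (snd w - snd z) ^ 2) / u ^ 2 * u ^ 2)
      with ((fst w - fst z) ^ 2 + (snd w - snd z) ^ 2) by (field; lra).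
    replace (R^2 * u^2) with ((u * R)^2) by ring. exact Hw.
  - destruct w as [w1 w2]. unfold z, comb; simpl. fold u.
    f_equal; field; lra.
Qed.

Lemma comb_interior (Om : pset) a b t : convex Om -> pl_interior Om a -> Om b ->
  0 <= t < 1 -> pl_interior Om (comb a b t).
Proof.
  intros Hc [R [HR Ha]] Hb Ht.
  exists ((1 - t) * R); split; [nra|].
  intros w Hw. destruct (comb_ball_pre a b t R w Ht HR Hw) as [a' [Ha' ->]].
  apply convex_comb; auto. lra.
Qed.

Lemma comb0 a b : comb a b 0 = a.
Proof. destruct a; unfold comb; simpl; f_equal; ring. Qed.
Lemma comb1 a b : comb a b 1 = b.
Proof. destruct b; unfold comb; simpl; f_equal; ring. Qed.

Definition aff (a b c : R) (w : pt) : R := a + b * fst w + c * snd w.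

Lemma aff_comb a b c x y t : aff a b c (comb x y t) = (1 - t) * aff a b c x + t * aff a b c y.
Proof. unfold aff, comb; cbn [fst snd]; ring. Qed.

Lemma affine_ge_eq q rho a1 b1 c1 a2 b2 c2 : 0 < rho ->
  (forall w, pl_ball q rho w -> aff a2 b2 c2 w <= aff a1 b1 c1 w) ->
  aff a1 b1 c1 q = aff a2 b2 c2 q ->
  forall w, aff a1 b1 c1 w = aff a2 b2 c2 w.
Proof.
  intros Hr H Hq.
  set (h := rho / 2).
  assert (Hh : 0 < h) by (unfold h; lra).
  assert (B : forall d1 d2, d1^2 + d2^2 < rho^2 -> pl_ball q rho (fst q + d1, snd q + d2)).
  { intros d1 d2 Hd. unfold pl_ball; cbn [fst snd].
    replace (fst q + d1 - fst q) with d1 by ring. replace (snd q + d2 - snd q) with d2 by ring. auto. }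
  assert (Hhr : h^2 + 0^2 < rho^2) by (unfold h; nra).
  assert (Hhr' : (-h)^2 + 0^2 < rho^2) by (unfold h; nra).
  assert (Hhr2 : 0^2 + h^2 < rho^2) by (unfold h; nra).
  assert (Hhr2' : 0^2 + (-h)^2 < rho^2) by (unfold h; nra).
  pose proof (H _ (B _ _ Hhr)) as E1. pose proof (H _ (B _ _ Hhr')) as E2.
  pose proof (H _ (B _ _ Hhr2)) as E3. pose proof (H _ (B _ _ Hhr2')) as E4.
  unfold aff in *; cbn [fst snd] in *.
  assert (b1 = b2) by nra. assert (c1 = c2) by nra. subst.
  intros w. lra.
Qed.

Lemma aff_cont a b c x d : 0 < d -> exists rho, 0 < rho /\
  forall w, pl_ball x rho w -> Rabs (aff a b c w - aff a b c x) < d.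
Proof.
  intros Hd.
  set (K := Rabs b + Rabs c + 1).
  assert (HK : 0 < K) by (unfold K; pose proof (Rabs_pos b); pose proof (Rabs_pos c); lra).
  assert (HdK : 0 < d / K) by (apply Rdiv_lt_0_compat; auto).
  exists (d / K); split; auto.
  intros w Hw. destruct (ball_coord _ _ _ Hw HdK) as [H1 H2].
  unfold aff.
  replace (a + b * fst w + c * snd w - (a + b * fst x + c * snd x))
    with (b * (fst w - fst x) + c * (snd w - snd x)) by ring.
  eapply Rle_lt_trans. apply Rabs_triang. rewrite !Rabs_mult.
  pose proof (Rabs_pos b); pose proof (Rabs_pos c).
  pose proof (Rabs_pos (fst w - fst x)); pose proof (Rabs_pos (snd w - snd x)).
  assert (Hdk : d / K * K = d) by (field; lra).
  assert (Rabs b * Rabs (fst w - fst x) <= Rabs b * (d/K)) by (apply Rmult_le_compat_l; lra).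
  assert (Rabs c * Rabs (snd w - snd x) <= Rabs c * (d/K)) by (apply Rmult_le_compat_l; lra).
  assert (0 < d / K) by (apply Rdiv_lt_0_compat; auto).
  set (e := d / K) in *. clearbody e. unfold K in Hdk. lra.
Qed.

Definition has_formula (Om : pset) (h : pt -> R) : Prop :=
  exists c : Z -> Z -> option R,
    forall p, pl_interior Om p ->
      (exists i j v, c i j = Some v /\
          h p = v + IZR i * fst p + IZR j * snd p) /\
      (forall i j v, c i j = Some v ->
          h p <= v + IZR i * fst p + IZR j * snd p).

Definition ocmin (o1 o2 : option R) : option R :=
  match o1, o2 with
  | Some a, Some b => Some (Rmin a b)
  | Some a, None => Some a
  | None, o => o
  end.

Lemma formula_min Om h1 h2 : has_formula Om h1 -> has_formula Om h2 ->
  has_formula Om (fun x => Rmin (h1 x) (h2 x)).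
Proof.
  intros [c1 H1] [c2 H2].
  exists (fun i j => ocmin (c1 i j) (c2 i j)).
  intros p Hp.
  destruct (H1 p Hp) as [[i1 [j1 [v1 [E1 F1]]]] B1].
  destruct (H2 p Hp) as [[i2 [j2 [v2 [E2 F2]]]] B2].
  pose proof (Rmin_l (h1 p) (h2 p)). pose proof (Rmin_r (h1 p) (h2 p)).
  split.
  - destruct (Rle_dec (h1 p) (h2 p)) as [Hle|Hle].
    + rewrite (Rmin_left _ _ Hle).
      exists i1, j1. rewrite E1.
      destruct (c2 i1 j1) as [b|] eqn:Eb; simpl.
      * assert (v1 <= b) by (pose proof (B2 _ _ _ Eb); lra).
        rewrite Rmin_left by auto. eexists; split; [reflexivity|auto].
      * eexists; split; [reflexivity|auto].
    + rewrite (Rmin_right (h1 p) (h2 p)) by lra.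
      exists i2, j2. rewrite E2.
      destruct (c1 i2 j2) as [b|] eqn:Eb; simpl.
      * assert (v2 <= b) by (pose proof (B1 _ _ _ Eb); lra).
        rewrite Rmin_right by auto. eexists; split; [reflexivity|auto].
      * eexists; split; [reflexivity|auto].
  - intros i j w E. unfold ocmin in E.
    destruct (c1 i j) as [a|] eqn:Ea; destruct (c2 i j) as [b|] eqn:Eb; inversion E; subst.
    + pose proof (B1 _ _ _ Ea). pose proof (B2 _ _ _ Eb).
      destruct (Rle_dec a b).
      * rewrite (Rmin_left a b) by auto. lra.
      * rewrite (Rmin_right a b) by lra. lra.
    + pose proof (B1 _ _ _ Ea). lra.
    + pose proof (B2 _ _ _ Eb). lra.
Qed.

Lemma formula_mono Om v i0 j0 : has_formula Om (aff v (IZR i0) (IZR j0)).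
Proof.
  exists (fun i j => if (Z.eqb i i0 && Z.eqb j j0)%bool then Some v else None).
  intros p Hp. split.
  - exists i0, j0, v. rewrite !Z.eqb_refl. simpl. split; auto.
  - intros i j w E.
    destruct (Z.eqb i i0) eqn:Ei; destruct (Z.eqb j j0) eqn:Ej; simpl in E; try discriminate.
    apply Z.eqb_eq in Ei. apply Z.eqb_eq in Ej. subst. inversion E; subst.
    unfold aff; lra.
Qed.

Lemma formula_ext Om h h' : (forall p, pl_interior Om p -> h p = h' p) ->
  has_formula Om h -> has_formula Om h'.
Proof.
  intros Heq [c H]. exists c. intros p Hp. rewrite <- (Heq p Hp). apply H; auto.
Qed.

Lemma star_conn (S : pset) c : S c ->
  (forall z, S z -> exists T : pset, pl_connected T /\ (forall w, T w -> S w) /\ T c /\ T z) ->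
  pl_connected S.
Proof.
  intros Sc H [U [V [HU [HV [Hcov [[u [Su Uu]] [[v [Sv Vv]] Hdis]]]]]]].
  destruct (Hcov c Sc) as [Uc|Vc].
  - destruct (H v Sv) as [T [HT [TS [Tc Tv]]]].
    apply HT. exists U, V. split; [auto|split; [auto|split; [|split; [|split]]]].
    + intros p Tp. apply Hcov, TS, Tp.
    + exists c; auto.
    + exists v; auto.
    + intros p Tp. apply Hdis, TS, Tp.
  - destruct (H u Su) as [T [HT [TS [Tc Tu]]]].
    apply HT. exists U, V. split; [auto|split; [auto|split; [|split; [|split]]]].
    + intros p Tp. apply Hcov, TS, Tp.
    + exists u; auto.
    + exists c; auto.
    + intros p Tp. apply Hdis, TS, Tp.
Qed.

Lemma union_conn (T1 T2 : pset) p : pl_connected T1 -> pl_connected T2 -> T1 p -> T2 p ->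
  pl_connected (fun w => T1 w \/ T2 w).
Proof.
  intros H1 H2 P1 P2. apply star_conn with p; [left; auto|].
  intros z [Hz|Hz].
  - exists T1; split; [auto|split; [|split; auto]]. intros; left; auto.
  - exists T2; split; [auto|split; [|split; auto]]. intros; right; auto.
Qed.

Lemma interval_conn (pU pV : R -> Prop) s1 s2 :
  (forall s, 0 <= s <= 1 -> pU s \/ pV s) ->
  (forall s, 0 <= s <= 1 -> pU s -> pV s -> False) ->
  (forall s, pU s -> exists d, 0 < d /\ forall r, Rabs (r - s) < d -> pU r) ->
  (forall s, pV s -> exists d, 0 < d /\ forall r, Rabs (r - s) < d -> pV r) ->
  0 <= s1 <= 1 -> 0 <= s2 <= 1 -> pU s1 -> pV s2 -> s1 < s2 -> False.
Proof.
  intros Hcov Hdis HoU HoV Hs1 Hs2 U1 V2 Hlt.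
  set (E := fun s => s1 <= s <= s2 /\ forall r, s1 <= r <= s -> pU r).
  assert (Eb : bound E) by (exists s2; intros s [Hs _]; lra).
  assert (Ee : exists x, E x).
  { exists s1. split; [lra|]. intros r Hr. replace r with s1 by lra. auto. }
  destruct (completeness E Eb Ee) as [sig [Hub Hlub]].
  assert (Hsig1 : s1 <= sig) by (apply Hub; destruct Ee; unfold E; split; [lra|];
    intros r Hr; replace r with s1 by lra; auto).
  assert (Hsig2 : sig <= s2) by (apply Hlub; intros s [Hs _]; lra).
  assert (Below : forall r, s1 <= r < sig -> pU r).
  { intros r Hr. apply NNPP; intro Hn.
    assert (sig <= r). { apply Hlub. intros s [Hs Hs']. destruct (Rle_or_lt s r); auto.
      exfalso. apply Hn. apply Hs'. lra. }
    lra. }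
  destruct (Hcov sig ltac:(lra)) as [Us|Vs].
  - destruct (HoU sig Us) as [d [Hd Hd']].
    destruct (Req_dec sig s2) as [Heq|Hne].
    + subst sig. apply (Hdis s2); auto.
    + set (s' := Rmin (sig + d/2) s2).
      assert (Es' : E s').
      { unfold s'. split. split. pose proof (Rmin_glb (sig + d/2) s2 s1). apply H; lra. apply Rmin_r.
        intros r Hr. destruct (Rlt_or_le r sig). apply Below; lra.
        apply Hd'. pose proof (Rmin_l (sig + d/2) s2). apply Rabs_def1; lra. }
      pose proof (Hub s' Es'). unfold s' in H.
      assert (sig < Rmin (sig + d/2) s2) by (apply Rmin_glb_lt; lra). lra.
  - destruct (HoV sig Vs) as [d [Hd Hd']].
    destruct (Req_dec sig s1) as [Heq|Hne].
    + subst sig. apply (Hdis s1); auto.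
    + set (r := Rmax s1 (sig - d/2)).
      assert (Hr1 : s1 <= r) by apply Rmax_l.
      assert (Hr2 : r < sig) by (apply Rmax_lub_lt; lra).
      apply (Hdis r). lra. apply Below; lra.
      apply Hd'. pose proof (Rmax_r s1 (sig - d/2)). apply Rabs_def1; fold r in H; lra.
Qed.

Definition seg (a b : pt) : pset := fun w => exists s, 0 <= s <= 1 /\ w = comb a b s.

Lemma comb_cont a b s rho : 0 < rho -> exists d, 0 < d /\
  forall r, Rabs (r - s) < d -> pl_ball (comb a b s) rho (comb a b r).
Proof.
  intros Hr.
  set (D := (fst b - fst a)^2 + (snd b - snd a)^2).
  assert (HD : 0 <= D) by (unfold D; pose proof (pow2_ge_0 (fst b - fst a)); pose proof (pow2_ge_0 (snd b - snd a)); lra).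
  exists (rho / (D + 1)). split. apply Rdiv_lt_0_compat; lra.
  intros r Hrs. unfold pl_ball, comb; cbn [fst snd].
  replace (((1 - r) * fst a + r * fst b - ((1 - s) * fst a + s * fst b)) ^ 2 +
           ((1 - r) * snd a + r * snd b - ((1 - s) * snd a + s * snd b)) ^ 2)
    with ((r - s)^2 * D) by (unfold D; ring).
  set (dl := rho / (D + 1)) in *.
  assert (Hdl : dl * (D + 1) = rho) by (unfold dl; field; lra).
  assert (Hdl0 : 0 < dl) by (unfold dl; apply Rdiv_lt_0_compat; lra).
  assert (Hsq : (r - s)^2 <= dl^2).
  { rewrite <- pow2_abs. pose proof (Rabs_pos (r - s)). nra. }
  assert ((r - s)^2 * D <= dl^2 * D) by (apply Rmult_le_compat_r; auto).
  assert (dl^2 * D < dl^2 * (D+1)^2) by (apply Rmult_lt_compat_l; nra).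
  assert (dl^2 * (D+1)^2 = rho^2) by (rewrite <- Hdl; ring).
  lra.
Qed.

Lemma seg_conn a b : pl_connected (seg a b).
Proof.
  intros [U [V [HU [HV [Hcov [[u [[su [Hsu Eu]] Uu]] [[v [[sv [Hsv Ev]] Vv]] Hdis]]]]]]].
  subst u v.
  set (pU := fun s => U (comb a b s)). set (pV := fun s => V (comb a b s)).
  assert (cov : forall s, 0 <= s <= 1 -> pU s \/ pV s).
  { intros s Hs. apply Hcov. exists s; auto. }
  assert (dis : forall s, 0 <= s <= 1 -> pU s -> pV s -> False).
  { intros s Hs. apply Hdis. exists s; auto. }
  assert (oU : forall s, pU s -> exists d, 0 < d /\ forall r, Rabs (r - s) < d -> pU r).
  { intros s Hs. destruct (HU _ Hs) as [rho [Hrho H]].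
    destruct (comb_cont a b s rho Hrho) as [d [Hd H']]. exists d; split; auto.
    intros r Hr. apply H, H'; auto. }
  assert (oV : forall s, pV s -> exists d, 0 < d /\ forall r, Rabs (r - s) < d -> pV r).
  { intros s Hs. destruct (HV _ Hs) as [rho [Hrho H]].
    destruct (comb_cont a b s rho Hrho) as [d [Hd H']]. exists d; split; auto.
    intros r Hr. apply H, H'; auto. }
  destruct (Rtotal_order su sv) as [Hl|[He|Hg]].
  - exact (interval_conn pU pV su sv cov dis oU oV Hsu Hsv Uu Vv Hl).
  - subst. exact (dis sv Hsv Uu Vv).
  - apply (interval_conn pV pU sv su); auto.
    + intros s Hs. destruct (cov s Hs); auto.
    + intros s Hs H1 H2. exact (dis s Hs H2 H1).
Qed.

Lemma seg_sub_ball x0 r0 k : 0 < r0 -> pl_ball x0 r0 k -> forall w, seg x0 k w -> pl_ball x0 r0 w.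
Proof.
  intros Hr Hk w [s [Hs ->]]. unfold pl_ball, comb in *; cbn [fst snd].
  replace ((1 - s) * fst x0 + s * fst k - fst x0) with (s * (fst k - fst x0)) by ring.
  replace ((1 - s) * snd x0 + s * snd k - snd x0) with (s * (snd k - snd x0)) by ring.
  pose proof (pow2_ge_0 (fst k - fst x0)); pose proof (pow2_ge_0 (snd k - snd x0)).
  replace ((s * (fst k - fst x0)) ^ 2 + (s * (snd k - snd x0)) ^ 2)
    with (s^2 * ((fst k - fst x0) ^ 2 + (snd k - snd x0) ^ 2)) by ring.
  assert (s^2 <= 1) by nra.
  assert (s^2 * ((fst k - fst x0) ^ 2 + (snd k - snd x0) ^ 2) <= (fst k - fst x0) ^ 2 + (snd k - snd x0) ^ 2).
  { pose proof (pow2_ge_0 s). nra. }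
  lra.
Qed.

Lemma cone_closure (Om : pset) (f : pt -> R) x0 r0 a b c q0 :
  convex Om -> 0 < r0 ->
  (forall k, pl_ball x0 r0 k -> pl_interior Om k) ->
  (forall x, pl_interior Om x -> f x <= aff a b c x) ->
  Om q0 ->
  (forall k t, pl_ball x0 r0 k -> 0 <= t < 1 -> aff a b c (comb k q0 t) <= f (comb k q0 t)) ->
  pl_closure (pl_component (fun p => pl_interior Om p /\ ~ trop_curve Om f p) x0) q0.
Proof.
  intros Hconv Hr0 HBint Hfle Hq0 H.
  set (V0 := fun z => exists k t, pl_ball x0 r0 k /\ 0 <= t < 1 /\ z = comb k q0 t).
  assert (V0int : forall z, V0 z -> pl_interior Om z).
  { intros z [k [t [Hk [Ht ->]]]]. apply comb_interior; auto. }
  assert (V0open : forall z, V0 z -> exists rho, 0 < rho /\ forall w, pl_ball z rho w -> V0 w).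
  { intros z [k [t [Hk [Ht ->]]]].
    destruct (ball_open x0 r0 k Hr0 Hk) as [rho [Hrho Hsub]].
    exists ((1 - t) * rho); split; [nra|].
    intros w Hw. destruct (comb_ball_pre k q0 t rho w Ht Hrho Hw) as [k' [Hk' ->]].
    exists k', t; split; [apply Hsub; auto|split; auto]. }
  assert (V0eq : forall z, V0 z -> f z = aff a b c z).
  { intros z Hz. pose proof (Hfle z (V0int z Hz)).
    destruct Hz as [k [t [Hk [Ht ->]]]]. pose proof (H k t Hk Ht). lra. }
  assert (V0A : forall z, V0 z -> pl_interior Om z /\ ~ trop_curve Om f z).
  { intros z Hz. split; [apply V0int; auto|]. intros [_ Hns]. apply Hns.
    destruct (V0open z Hz) as [rho [Hrho Hsub]].
    exists rho, a, b, c. split; [auto|]. intros q Hq _. apply V0eq, Hsub, Hq. }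
  assert (V0x0 : V0 x0).
  { exists x0, 0. split; [apply ball_center; auto|split; [lra|]]. rewrite comb0; auto. }
  assert (V0conn : pl_connected V0).
  { apply star_conn with x0; auto.
    intros z [k [t [Hk [Ht ->]]]].
    exists (fun w => seg x0 k w \/ seg k (comb k q0 t) w).
    split; [|split; [|split]].
    - apply union_conn with k; try apply seg_conn.
      + exists 1. split; [lra|]. rewrite comb1; auto.
      + exists 0. split; [lra|]. rewrite comb0; auto.
    - intros w [Hw|Hw].
      + exists w, 0. split; [apply (seg_sub_ball x0 r0 k); auto|split; [lra|]]. rewrite comb0; auto.
      + destruct Hw as [s [Hs ->]]. exists k, (s * t). split; auto. split; [nra|].
        destruct k; unfold comb; cbn [fst snd]; f_equal; ring.
    - left. exists 0. split; [lra|]. rewrite comb0; auto.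
    - right. exists 1. split; [lra|]. rewrite comb1; auto. }
  intros r Hr.
  set (D := (fst x0 - fst q0)^2 + (snd x0 - snd q0)^2).
  assert (HD : 0 <= D) by (unfold D; pose proof (pow2_ge_0 (fst x0 - fst q0)); pose proof (pow2_ge_0 (snd x0 - snd q0)); lra).
  set (u := r / (r + 1 + D)).
  assert (Hu : u * (r + 1 + D) = r) by (unfold u; field; lra).
  assert (Hu0 : 0 < u) by (unfold u; apply Rdiv_lt_0_compat; lra).
  assert (Hu1 : u < 1) by nra.
  assert (Hur : u < r) by nra.
  assert (HuD : u * D < r) by nra.
  exists (comb x0 q0 (1 - u)). split.
  - unfold pl_ball, comb; cbn [fst snd].
    replace ((1 - (1 - u)) * fst x0 + (1 - u) * fst q0 - fst q0) with (u * (fst x0 - fst q0)) by ring.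
    replace ((1 - (1 - u)) * snd x0 + (1 - u) * snd q0 - snd q0) with (u * (snd x0 - snd q0)) by ring.
    replace ((u * (fst x0 - fst q0)) ^ 2 + (u * (snd x0 - snd q0)) ^ 2) with (u * (u * D)) by (unfold D; ring).
    assert (0 <= u * D) by nra. nra.
  - exists V0. split; [auto|split; [auto|split; auto]].
    exists x0, (1 - u). split; [apply ball_center; auto|split; [lra|auto]].
Qed.

Definition posR := {e : R | 0 < e}.

Lemma list_min (l : list posR) : exists eps, 0 < eps /\ forall i, In i l -> eps <= proj1_sig i.
Proof.
  induction l as [|i l [e [He Hl]]].
  - exists 1. split; [lra|]. intros i [].
  - exists (Rmin e (proj1_sig i)). split.
    + destruct i as [x Hx]; simpl. apply Rmin_glb_lt; auto.
    + intros j [<-|Hj]. apply Rmin_r. eapply Rle_trans; [apply Rmin_l|]. apply Hl; auto.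
Qed.

Lemma list_max (l : list posR) : exists R, 0 < R /\ forall i, In i l -> proj1_sig i <= R.
Proof.
  induction l as [|i l [e [He Hl]]].
  - exists 1. split; [lra|]. intros i [].
  - exists (Rmax e (proj1_sig i)). split.
    + eapply Rlt_le_trans; [apply He|apply Rmax_l].
    + intros j [<-|Hj]. apply Rmax_r. eapply Rle_trans; [apply Hl; auto|apply Rmax_l].
Qed.

Lemma compact_pos (Om : pset) (h : pt -> R) : pl_compact Om ->
  (forall x e, e < h x -> exists rho, 0 < rho /\ forall w, pl_ball x rho w -> e < h w) ->
  (forall x, Om x -> 0 < h x) ->
  exists eps, 0 < eps /\ forall x, Om x -> eps <= h x.
Proof.
  intros Hc Hcont Hpos.
  destruct (Hc posR (fun i x => proj1_sig i < h x)) as [l Hl].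
  - intros i x Hx. destruct (Hcont x _ Hx) as [rho [Hrho H]]. exists rho; split; auto.
  - intros x Hx. assert (H : 0 < h x / 2) by (pose proof (Hpos x Hx); lra).
    exists (exist _ (h x / 2) H). simpl. pose proof (Hpos x Hx); lra.
  - destruct (list_min l) as [eps [He Hle]]. exists eps; split; auto.
    intros x Hx. destruct (Hl x Hx) as [i [Hi Hix]]. pose proof (Hle i Hi). lra.
Qed.

Lemma compact_bounded (Om : pset) : pl_compact Om ->
  exists R, 0 < R /\ forall x, Om x -> pl_ball (0, 0) R x.
Proof.
  intros Hc.
  destruct (Hc posR (fun i x => pl_ball (0,0) (proj1_sig i) x)) as [l Hl].
  - intros i x Hx. destruct (ball_open (0,0) (proj1_sig i) x (proj2_sig i) Hx) as [rho [Hrho H]].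
    exists rho; split; auto.
  - intros x Hx.
    set (e := (fst x)^2 + (snd x)^2 + 1).
    assert (He : 0 < e) by (unfold e; pose proof (pow2_ge_0 (fst x)); pose proof (pow2_ge_0 (snd x)); lra).
    exists (exist _ e He). simpl. unfold pl_ball; cbn [fst snd].
    replace (fst x - 0) with (fst x) by ring. replace (snd x - 0) with (snd x) by ring.
    unfold e. pose proof (pow2_ge_0 (fst x)); pose proof (pow2_ge_0 (snd x)). nra.
  - destruct (list_max l) as [R [HR Hle]]. exists R; split; auto.
    intros x Hx. destruct (Hl x Hx) as [i [Hi Hix]]. pose proof (Hle i Hi).
    apply ball_mono with (proj1_sig i); auto. apply (proj2_sig i).
Qed.

Lemma compact_closed (Om : pset) y : pl_compact Om -> ~ Om y ->
  exists rho, 0 < rho /\ forall w, pl_ball y rho w -> ~ Om w.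
Proof.
  intros Hc Hy.
  destruct (Hc posR (fun i x => (proj1_sig i)^2 < (fst x - fst y)^2 + (snd x - snd y)^2)) as [l Hl].
  - intros i x Hx. destruct i as [e He]; cbn [proj1_sig] in *.
    set (d2 := (fst x - fst y)^2 + (snd x - snd y)^2) in *.
    assert (Hd2 : 0 <= d2) by (unfold d2; pose proof (pow2_ge_0 (fst x - fst y)); pose proof (pow2_ge_0 (snd x - snd y)); lra).
    set (D := sqrt d2). assert (HDD : D * D = d2) by (apply sqrt_sqrt; auto).
    assert (HD0 : 0 <= D) by apply sqrt_pos.
    assert (HeD : e < D).
    { destruct (Rlt_or_le e D) as [h|h]; auto.
      assert (D * D <= e * e) by (apply Rmult_le_compat; lra). nra. }
    exists ((D - e)/2). split; [lra|]. intros w Hw.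
    destruct (Rlt_or_le (e^2) ((fst w - fst y)^2 + (snd w - snd y)^2)) as [h|h]; auto.
    exfalso.
    assert (Hyw : pl_ball w (e + (D - e)/2) y).
    { unfold pl_ball. replace ((fst y - fst w)^2 + (snd y - snd w)^2)
        with ((fst w - fst y)^2 + (snd w - snd y)^2) by ring. nra. }
    pose proof (ball_tri x w y _ _ Hyw Hw ltac:(lra) ltac:(lra)) as Hxy.
    unfold pl_ball in Hxy.
    replace (e + (D - e) / 2 + (D - e) / 2) with D in Hxy by field.
    replace ((fst y - fst x)^2 + (snd y - snd x)^2) with d2 in Hxy by (unfold d2; ring).
    nra.
  - intros x Hx.
    set (d2 := (fst x - fst y)^2 + (snd x - snd y)^2).
    pose proof (pow2_ge_0 (fst x - fst y)); pose proof (pow2_ge_0 (snd x - snd y)).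
    assert (Hd2 : 0 < d2).
    { destruct (Rlt_or_le 0 d2) as [h|h]; auto. exfalso.
      assert (fst x - fst y = 0) by (apply Rsqr_eq_0; unfold Rsqr; unfold d2 in h; nra).
      assert (snd x - snd y = 0) by (apply Rsqr_eq_0; unfold Rsqr; unfold d2 in h; nra).
      apply Hy. replace y with x; auto. destruct x, y; simpl in *; f_equal; lra. }
    assert (He : 0 < sqrt d2 / 2) by (pose proof (sqrt_lt_R0 d2 Hd2); lra).
    exists (exist _ (sqrt d2 / 2) He). simpl. fold d2.
    assert (sqrt d2 * sqrt d2 = d2) by (apply sqrt_sqrt; lra).
    nra.
  - destruct (list_min l) as [eps [He Hle]]. exists eps; split; auto.
    intros w Hw Ow. destruct (Hl w Ow) as [i [Hi Hiw]]. pose proof (Hle i Hi).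
    unfold pl_ball in Hw. destruct i as [e Hpe]; simpl in *.
    assert (eps^2 <= e^2) by nra. lra.
Qed.

Lemma exists_bdry (Om : pset) x0 : pl_compact Om -> Om x0 ->
  exists y, Om y /\ ~ pl_interior Om y.
Proof.
  intros Hc Hx0. apply NNPP; intro Hn.
  assert (Hall : forall y, Om y -> pl_interior Om y).
  { intros y Hy. apply NNPP; intro Hi. apply Hn; exists y; auto. }
  destruct (compact_bounded Om Hc) as [R [HR HB]].
  assert (Hz : ~ Om (R, 0)).
  { intros Hz. pose proof (HB _ Hz). unfold pl_ball in H; cbn [fst snd] in H. nra. }
  apply (seg_conn x0 (R, 0)).
  exists Om, (fun w => ~ Om w).
  split; [|split; [|split; [|split; [|split]]]].
  - intros p Hp. apply Hall; auto.
  - intros p Hp. apply compact_closed; auto.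
  - intros p _. apply classic.
  - exists x0. split; auto. exists 0. split; [lra|]. rewrite comb0; auto.
  - exists (R, 0). split; auto. exists 1. split; [lra|]. rewrite comb1; auto.
  - intros p _ H1 H2; auto.
Qed.

Definition feasible (Om : pset) (P : list pt) (g : pt -> R) : Prop :=
  is_tropical_series Om g /\ (forall q, Om q -> zero_fun q <= g q) /\
  (forall q, In q P -> trop_curve Om g q).

Lemma smooth_transfer Om g h q : is_tropical_series Om g -> pl_interior Om q ->
  (forall w, pl_interior Om w -> h w <= g w) -> h q = g q ->
  smooth_at Om h q -> smooth_at Om g q.
Proof.
  intros [_ [_ [c Hc]]] Hq Hhg Heq [r [a [b [c' [Hr Hs]]]]].
  destruct (Hc q Hq) as [[i [j [v [E Gq]]]] _].
  destruct (interior_open Om q Hq) as [r' [Hr' Hint]].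
  set (rho := Rmin r r').
  assert (Hrho : 0 < rho) by (apply Rmin_glb_lt; auto).
  assert (B1 : forall w, pl_ball q rho w -> pl_ball q r w) by (intros; eapply ball_mono; eauto; apply Rmin_l).
  assert (B2 : forall w, pl_ball q rho w -> pl_interior Om w) by (intros; apply Hint; eapply ball_mono; eauto; apply Rmin_r).
  assert (Heqa : forall w, aff v (IZR i) (IZR j) w = aff a b c' w).
  { apply (affine_ge_eq q rho); auto.
    - intros w Hw. pose proof (B2 w Hw) as Iw.
      pose proof (Hs w (B1 w Hw) (interior_in _ _ Iw)).
      pose proof (Hhg w Iw). destruct (Hc w Iw) as [_ Bw]. pose proof (Bw _ _ _ E).
      unfold aff; lra.
    - pose proof (Hs q (B1 q (ball_center q rho Hrho)) (interior_in _ _ Hq)).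
      unfold aff; lra. }
  exists rho, a, b, c'. split; auto. intros w Hw Ow.
  pose proof (B2 w Hw) as Iw. pose proof (Hs w (B1 w Hw) Ow).
  pose proof (Hhg w Iw). destruct (Hc w Iw) as [_ Bw]. pose proof (Bw _ _ _ E).
  pose proof (Heqa w). unfold aff in *. lra.
Qed.

Lemma feasible_min Om P g1 g2 : feasible Om P g1 -> feasible Om P g2 ->
  feasible Om P (fun x => Rmin (g1 x) (g2 x)).
Proof.
  intros [[N1 [Z1 F1]] [P1 C1]] [[N2 [Z2 F2]] [P2 C2]].
  pose proof (conj N1 (conj Z1 F1)) as T1. pose proof (conj N2 (conj Z2 F2)) as T2.
  split; [split; [|split]|split].
  - intros p Hp. apply Rmin_glb; auto.
  - intros p Hp. rewrite Z1, Z2; auto. apply Rmin_left; lra.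
  - apply formula_min; auto.
  - intros q Hq. unfold zero_fun. apply Rmin_glb; [apply P1|apply P2]; auto.
  - intros q Hq. destruct (C1 q Hq) as [Iq Ns1]. destruct (C2 q Hq) as [_ Ns2].
    split; auto. intros Hs.
    destruct (Rle_dec (g1 q) (g2 q)) as [h|h].
    + apply Ns1. apply (smooth_transfer Om g1 (fun x => Rmin (g1 x) (g2 x)) q T1 Iq); auto.
      intros; apply Rmin_l. apply Rmin_left; auto.
    + apply Ns2. apply (smooth_transfer Om g2 (fun x => Rmin (g1 x) (g2 x)) q T2 Iq); auto.
      intros; apply Rmin_r. apply Rmin_right; lra.
Qed.

Theorem mainTheorem2 (Omega : pset) (P : list pt) (f : pt -> R) :
  pl_compact Omega -> convex Omega -> (exists p, pl_interior Omega p) ->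
  (forall p, In p P -> pl_interior Omega p) ->
  is_GP Omega P zero_fun f ->
  forall K : pset,
    is_component (fun p => pl_interior Omega p /\ ~ trop_curve Omega f p) K ->
    (forall q, pl_closure K q -> ~ pl_boundary Omega q) ->
    exists p, In p P /\ pl_closure K p.
Proof.
  intros Hcomp Hconv _ HPint HGP K [x0 [[Ix0 NCx0] HK]] Hclos.
  apply NNPP; intro Hno.
  set (A := fun p => pl_interior Omega p /\ ~ trop_curve Omega f p).
  assert (ClK : forall q, pl_closure (pl_component A x0) q -> pl_closure K q).
  { intros q H r Hr. destruct (H r Hr) as [y [Hy Cy]]. exists y; split; auto. apply HK; auto. }
  assert (GPex : forall p, Omega p -> exists g, feasible Omega P g /\ g p = f p).
  { intros p Hp. destruct (HGP p Hp) as [[g [Tg [Zg [Cg Eg]]]] _]. exists g.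
    split; [split; [auto|split; auto]|auto]. }
  assert (GPmin : forall p g, Omega p -> feasible Omega P g -> f p <= g p).
  { intros p g Hp [Tg [Zg Cg]]. destruct (HGP p Hp) as [_ H]. apply H; auto. }
  assert (fnn : forall p, Omega p -> 0 <= f p).
  { intros p Hp. destruct (GPex p Hp) as [g [[_ [Zg _]] Eg]]. rewrite <- Eg. apply Zg; auto. }
  assert (conc : forall x y t, pl_interior Omega x -> pl_interior Omega y -> 0 <= t <= 1 ->
     (1 - t) * f x + t * f y <= f (comb x y t)).
  { intros x y t Ix Iy Ht.
    assert (Iz : pl_interior Omega (comb x y t)).
    { destruct (Rlt_or_le t 1). apply comb_interior; auto. apply interior_in; auto. lra.
      replace t with 1 by lra. rewrite comb1; auto. }
    destruct (GPex _ (interior_in _ _ Iz)) as [g [Fg Eg]].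
    pose proof Fg as [[_ [_ [c Hc]]] _].
    destruct (Hc _ Iz) as [[i [j [v [E Gz]]]] _].
    destruct (Hc _ Ix) as [_ Bx]. destruct (Hc _ Iy) as [_ By].
    pose proof (Bx _ _ _ E). pose proof (By _ _ _ E).
    pose proof (GPmin x g (interior_in _ _ Ix) Fg). pose proof (GPmin y g (interior_in _ _ Iy) Fg).
    rewrite <- Eg, Gz.
    assert ((1 - t) * f x <= (1 - t) * (v + IZR i * fst x + IZR j * snd x)) by (apply Rmult_le_compat_l; lra).
    assert (t * f y <= t * (v + IZR i * fst y + IZR j * snd y)) by (apply Rmult_le_compat_l; lra).
    unfold comb; cbn [fst snd]. lra. }
  assert (Sx0 : smooth_at Omega f x0).
  { apply NNPP; intro H. apply NCx0. split; auto. }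
  destruct Sx0 as [r1 [a1 [b1 [c1 [Hr1 Hs1]]]]].
  destruct (GPex x0 (interior_in _ _ Ix0)) as [g0 [Fg0 Eg0]].
  pose proof Fg0 as [[_ [_ [c0 Hc0]]] _].
  destruct (Hc0 _ Ix0) as [[i0 [j0 [v0 [E0 G0x0]]]] _].
  destruct (interior_open _ _ Ix0) as [r3 [Hr3 Hint3]].
  set (r0 := Rmin r1 r3).
  assert (Hr0 : 0 < r0) by (apply Rmin_glb_lt; auto).
  assert (B0int : forall k, pl_ball x0 r0 k -> pl_interior Omega k)
    by (intros; apply Hint3; eapply ball_mono; eauto; apply Rmin_r).
  assert (B0r1 : forall k, pl_ball x0 r0 k -> pl_ball x0 r1 k)
    by (intros; eapply ball_mono; eauto; apply Rmin_l).
  assert (Hm : forall w, aff v0 (IZR i0) (IZR j0) w = aff a1 b1 c1 w).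
  { apply (affine_ge_eq x0 r0); auto.
    - intros w Hw. pose proof (B0int w Hw) as Iw.
      pose proof (Hs1 w (B0r1 w Hw) (interior_in _ _ Iw)).
      pose proof (GPmin w g0 (interior_in _ _ Iw) Fg0).
      destruct (Hc0 w Iw) as [_ Bw]. pose proof (Bw _ _ _ E0). unfold aff; lra.
    - pose proof (Hs1 x0 (ball_center x0 r1 Hr1) (interior_in _ _ Ix0)). unfold aff; lra. }
  assert (fB0 : forall k, pl_ball x0 r0 k -> f k = aff v0 (IZR i0) (IZR j0) k).
  { intros k Hk. rewrite Hm. pose proof (Hs1 k (B0r1 k Hk) (interior_in _ _ (B0int k Hk))).
    unfold aff; lra. }
  assert (fle : forall x, pl_interior Omega x -> f x <= aff v0 (IZR i0) (IZR j0) x).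
  { intros x Ix. pose proof (GPmin x g0 (interior_in _ _ Ix) Fg0).
    destruct (Hc0 x Ix) as [_ Bx]. pose proof (Bx _ _ _ E0). unfold aff; lra. }
  assert (HPlt : forall q, In q P -> f q < aff v0 (IZR i0) (IZR j0) q).
  { intros q Hq. destruct (Rlt_or_le (f q) (aff v0 (IZR i0) (IZR j0) q)) as [h|h]; auto. exfalso.
    apply Hno. exists q; split; auto. apply ClK.
    apply (cone_closure Omega f x0 r0 v0 (IZR i0) (IZR j0) q Hconv Hr0 B0int fle
             (interior_in _ _ (HPint q Hq))).
    intros k t Hk Ht. rewrite aff_comb.
    pose proof (conc k q t (B0int k Hk) (HPint q Hq) ltac:(lra)). rewrite <- (fB0 k Hk).
    assert (t * aff v0 (IZR i0) (IZR j0) q <= t * f q) by (apply Rmult_le_compat_l; lra). lra. }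
  assert (Bcase : forall y, Omega y -> ~ pl_interior Omega y -> aff v0 (IZR i0) (IZR j0) y <= 0 -> False).
  { intros y Oy Ny Hmy.
    apply (Hclos y).
    - apply ClK. apply (cone_closure Omega f x0 r0 v0 (IZR i0) (IZR j0) y Hconv Hr0 B0int fle Oy).
      intros k t Hk Ht.
      destruct (Rle_or_lt (aff v0 (IZR i0) (IZR j0) (comb k y t)) (f (comb k y t))) as [h|h]; auto.
      exfalso.
      assert (Hk0 : f k = aff v0 (IZR i0) (IZR j0) k) by (apply fB0; auto).
      assert (Hmk : 0 <= aff v0 (IZR i0) (IZR j0) k) by (rewrite <- Hk0; apply fnn, interior_in, B0int; auto).
      destruct (Req_dec t 0) as [Ht0|Ht0].
      { subst t. rewrite comb0 in h. lra. }
      set (mk := aff v0 (IZR i0) (IZR j0) k) in *.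
      set (delta := aff v0 (IZR i0) (IZR j0) (comb k y t) - f (comb k y t)).
      assert (Hdel : 0 < delta) by (unfold delta; lra).
      set (eta := Rmin ((1 - t)/2) (delta / (4 * mk + 4))).
      assert (He1 : eta <= (1 - t)/2) by apply Rmin_l.
      assert (He2 : eta <= delta / (4 * mk + 4)) by apply Rmin_r.
      assert (He0 : 0 < eta) by (apply Rmin_glb_lt; [lra|apply Rdiv_lt_0_compat; lra]).
      assert (He3 : eta * (4 * mk + 4) <= delta).
      { apply (Rmult_le_compat_r (4 * mk + 4)) in He2; [|lra].
        replace (delta / (4 * mk + 4) * (4 * mk + 4)) with delta in He2 by (field; lra). lra. }
      set (s := 1 - eta).
      assert (Hs : 0 < s < 1) by (unfold s; lra).
      assert (Hts : t < s) by (unfold s; lra).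
      assert (Iw : pl_interior Omega (comb k y s)) by (apply comb_interior; auto; lra).
      set (u := t / s).
      assert (Hus : u * s = t) by (unfold u; field; lra).
      assert (Hu0 : 0 <= u) by nra.
      assert (Hu1 : u <= 1) by nra.
      assert (Hz : comb k y t = comb k (comb k y s) u).
      { destruct k, y; unfold comb; cbn [fst snd]. rewrite <- Hus. f_equal; ring. }
      assert (Hc1 : (1 - u) * f k + u * f (comb k y s) <= f (comb k y t))
        by (rewrite Hz; apply conc; auto).
      assert (Hfw : 0 <= f (comb k y s)) by (apply fnn, interior_in; auto).
      assert (Hmz : aff v0 (IZR i0) (IZR j0) (comb k y t) = (1 - t) * mk + t * aff v0 (IZR i0) (IZR j0) y)
        by (unfold mk; apply aff_comb).
      assert (Hty : t * aff v0 (IZR i0) (IZR j0) y <= 0) by nra.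
      assert (Huf : 0 <= u * f (comb k y s)) by nra.
      assert (Hd1 : delta <= (u - t) * mk) by (unfold delta; rewrite Hk0 in Hc1; lra).
      assert (Hut : u - t = u * eta) by (unfold s in Hus; lra).
      assert (0 <= eta * mk) by nra.
      assert (u * (eta * mk) <= 1 * (eta * mk)) by (apply Rmult_le_compat_r; lra).
      rewrite Hut in Hd1. lra.
    - split; [|exact Ny]. intros r Hr. exists y; split; [apply ball_center|]; auto. }
  assert (Heps : exists eps, 0 < eps /\ forall x, Omega x -> eps <= aff v0 (IZR i0) (IZR j0) x).
  { destruct (classic (forall x, Omega x -> 0 < aff v0 (IZR i0) (IZR j0) x)) as [Hpos|Hneg].
    - apply compact_pos; auto. intros x e' He.
      destruct (aff_cont v0 (IZR i0) (IZR j0) x (aff v0 (IZR i0) (IZR j0) x - e') ltac:(lra))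
        as [rho [Hrho H]].
      exists rho; split; auto. intros w Hw. pose proof (H w Hw) as H'. apply Rabs_def2 in H'. lra.
    - exfalso. apply not_all_ex_not in Hneg. destruct Hneg as [q0 Hq0].
      apply imply_to_and in Hq0. destruct Hq0 as [Oq0 Hq0]. apply Rnot_lt_le in Hq0.
      destruct (classic (pl_interior Omega q0)) as [Iq0|Nq0].
      + destruct (interior_open _ _ Iq0) as [rq [Hrq Hintq]].
        assert (Hc : forall w, aff v0 (IZR i0) (IZR j0) w = aff (aff v0 (IZR i0) (IZR j0) q0) 0 0 w).
        { apply (affine_ge_eq q0 rq); auto.
          - intros w Hw. pose proof (Hintq w Hw) as Iw. pose proof (fle w Iw).
            pose proof (fnn w (interior_in _ _ Iw)).
            replace (aff (aff v0 (IZR i0) (IZR j0) q0) 0 0 w) with (aff v0 (IZR i0) (IZR j0) q0)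
              by (unfold aff; ring). lra.
          - unfold aff; ring. }
        destruct (exists_bdry Omega x0 Hcomp (interior_in _ _ Ix0)) as [y [Oy Ny]].
        apply (Bcase y Oy Ny). rewrite Hc.
        replace (aff (aff v0 (IZR i0) (IZR j0) q0) 0 0 y) with (aff v0 (IZR i0) (IZR j0) q0)
          by (unfold aff; ring). lra.
      + exact (Bcase q0 Oq0 Nq0 Hq0). }
  destruct Heps as [eps [Heps Hepsm]].
  assert (HG : forall L, (forall q, In q L -> In q P) ->
            exists G, feasible Omega P G /\ forall q, In q L -> G q <= f q).
  { induction L as [|q L IH]; intros HL.
    - exists g0; split; auto. intros q [].
    - destruct IH as [G [FG HGL]]. intros q' Hq'; apply HL; right; auto.
      assert (Iq : pl_interior Omega q) by (apply HPint, HL; left; auto).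
      destruct (GPex q (interior_in _ _ Iq)) as [gq [Fgq Egq]].
      exists (fun x => Rmin (gq x) (G x)). split. apply feasible_min; auto.
      intros q' [<-|Hq'].
      + pose proof (Rmin_l (gq q) (G q)). lra.
      + pose proof (Rmin_r (gq q') (G q')). pose proof (HGL q' Hq'). lra. }
  destruct (HG P (fun q H => H)) as [G [FG HGP']].
  assert (HE : forall L, (forall q, In q L -> In q P) ->
     exists e, 0 < e /\ e <= eps /\ forall q, In q L -> e < aff v0 (IZR i0) (IZR j0) q - G q).
  { induction L as [|q L IH]; intros HL.
    - exists eps. split; [auto|split; [lra|intros q []]].
    - destruct IH as [e [He [He1 He2]]]. intros q' Hq'; apply HL; right; auto.
      assert (Hq : G q < aff v0 (IZR i0) (IZR j0) q).
      { pose proof (HGP' q (HL q (or_introl eq_refl))). pose proof (HPlt q (HL q (or_introl eq_refl))). lra. }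
      exists (Rmin e ((aff v0 (IZR i0) (IZR j0) q - G q)/2)). split; [apply Rmin_glb_lt; lra|split].
      + eapply Rle_trans; [apply Rmin_l|auto].
      + intros q' [<-|Hq'].
        * pose proof (Rmin_r e ((aff v0 (IZR i0) (IZR j0) q - G q)/2)). lra.
        * pose proof (Rmin_l e ((aff v0 (IZR i0) (IZR j0) q - G q)/2)). pose proof (He2 q' Hq'). lra. }
  destruct (HE P (fun q H => H)) as [e [He0 [Hee HeP]]].
  set (G2 := fun x => if excluded_middle_informative (pl_interior Omega x)
                      then Rmin (G x) (aff v0 (IZR i0) (IZR j0) x - e) else 0).
  assert (G2int : forall x, pl_interior Omega x -> G2 x = Rmin (G x) (aff v0 (IZR i0) (IZR j0) x - e)).
  { intros x Ix. unfold G2. destruct (excluded_middle_informative (pl_interior Omega x)); [auto|contradiction]. }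
  assert (G2nint : forall x, ~ pl_interior Omega x -> G2 x = 0).
  { intros x Nx. unfold G2. destruct (excluded_middle_informative (pl_interior Omega x)); [contradiction|auto]. }
  destruct FG as [[NG [ZG FmG]] [PG CG]].
  assert (G2nn : forall x, Omega x -> 0 <= G2 x).
  { intros x Ox. destruct (classic (pl_interior Omega x)) as [Ix|Nx].
    - rewrite G2int; auto. apply Rmin_glb. apply NG; auto. pose proof (Hepsm x Ox); lra.
    - rewrite G2nint; auto; lra. }
  assert (FG2 : feasible Omega P G2).
  { split; [split; [|split]|split].
    - exact G2nn.
    - intros p [_ Np]. apply G2nint; auto.
    - apply (formula_ext Omega (fun x => Rmin (G x) (aff (v0 - e) (IZR i0) (IZR j0) x))).
      + intros p Ip. rewrite G2int; auto. f_equal. unfold aff; ring.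
      + apply formula_min; [exact FmG|apply formula_mono].
    - intros q Oq. unfold zero_fun. apply G2nn; auto.
    - intros q Hq. pose proof (HPint q Hq) as Iq. split; auto. intros HsG2.
      destruct (CG q Hq) as [_ NsG]. apply NsG.
      destruct FmG as [cG HcG].
      destruct (HcG q Iq) as [[i [j [v [E Gq]]]] _].
      pose proof (HeP q Hq) as Hlt.
      set (dd := (aff v0 (IZR i0) (IZR j0) q - e - G q)/2).
      assert (Hdd : 0 < dd) by (unfold dd; lra).
      assert (Hdde : 2 * dd = aff v0 (IZR i0) (IZR j0) q - e - G q) by (unfold dd; field).
      destruct (aff_cont v (IZR i) (IZR j) q dd Hdd) as [ra [Hra Ha]].
      destruct (aff_cont v0 (IZR i0) (IZR j0) q dd Hdd) as [rb [Hrb Hb]].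
      destruct (interior_open _ _ Iq) as [rc [Hrc Hintc]].
      destruct HsG2 as [r [a [b [c [Hr Hs]]]]].
      set (rho := Rmin r (Rmin ra (Rmin rb rc))).
      assert (Hrho : 0 < rho) by (repeat apply Rmin_glb_lt; auto).
      assert (L1 : rho <= r) by apply Rmin_l.
      assert (L2 : rho <= ra) by (eapply Rle_trans; [apply Rmin_r|apply Rmin_l]).
      assert (L3 : rho <= rb) by (eapply Rle_trans; [apply Rmin_r|]; eapply Rle_trans; [apply Rmin_r|apply Rmin_l]).
      assert (L4 : rho <= rc) by (eapply Rle_trans; [apply Rmin_r|]; eapply Rle_trans; [apply Rmin_r|apply Rmin_r]).
      exists rho, a, b, c. split; [auto|]. intros w Hw Ow.
      assert (Wr : pl_ball q r w) by exact (ball_mono q rho r w Hw Hrho L1).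
      assert (Wa : pl_ball q ra w) by exact (ball_mono q rho ra w Hw Hrho L2).
      assert (Wb : pl_ball q rb w) by exact (ball_mono q rho rb w Hw Hrho L3).
      assert (Wc : pl_ball q rc w) by exact (ball_mono q rho rc w Hw Hrho L4).
      pose proof (Hintc w Wc) as Iw.
      pose proof (Hs w Wr Ow) as Hsw.
      rewrite G2int in Hsw by auto.
      destruct (HcG w Iw) as [_ Bw]. pose proof (Bw _ _ _ E) as Bw'.
      pose proof (Ha w Wa) as Ha'. apply Rabs_def2 in Ha'.
      pose proof (Hb w Wb) as Hb'. apply Rabs_def2 in Hb'.
      rewrite Rmin_left in Hsw; [exact Hsw|].
      unfold aff in *. lra. }
  pose proof (GPmin x0 G2 (interior_in _ _ Ix0) FG2) as Hfin.
  rewrite G2int in Hfin by auto.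
  pose proof (Rmin_r (G x0) (aff v0 (IZR i0) (IZR j0) x0 - e)).
  assert (f x0 = aff v0 (IZR i0) (IZR j0) x0) by (apply fB0, ball_center; auto).
  lra.
Qed.
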